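(* Let $\Omega\subset\mathbb{R}^{n+m}$ be a bounded open set, $s\in(0,1)$ and $p\in(1,\infty)$. There is a constant $C>0$ such that \[ \|u\|_{L^p(\Omega)}\le C[u]_{\mathcal W^{s,p}(\mathbb{R}^{n+m})}\qquad\forall u\in\widetilde{\mathcal W}^{s,p}(\Omega). \]
   Context: Points of $\mathbb{R}^{n+m}$ are $(x,y)$, $x\in\mathbb{R}^n$, $y\in\mathbb{R}^m$. \[ [u]^p_{\mathcal W^{s,p}(\mathbb{R}^{n+m})}=\int_{\mathbb{R}^{n+m}}\int_{\mathbb{R}^n}\frac{|u(x,y)-u(z,y)|^p}{|x-z|^{n+sp}}\,dz\,dx\,dy+\int_{\mathbb{R}^{n+m}}\int_{\mathbb{R}^m}\frac{|u(x,y)-u(x,w)|^p}{|y-w|^{m+sp}}\,dw\,dx\,dy, \] and $\widetilde{\mathcal W}^{s,p}(\Omega)$ is the set of functions $u\in L^p(\mathbb{R}^{n+m})$ with $[u]_{\mathcal W^{s,p}(\mathbb{R}^{n+m})}<\infty$ and $u\equiv0$ in $\mathbb{R}^{n+m}\setminus\Omega$. *)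

(* Defs.v *)
From HB Require Import structures.
From mathcomp Require Import all_boot all_order all_algebra.
From mathcomp Require Import all_classical all_reals all_analysis.
Set Implicit Arguments. Unset Strict Implicit. Unset Printing Implicit Defensive.
Import Order.TTheory GRing.Theory Num.Theory.
Import numFieldNormedType.Exports.
Local Open Scope classical_set_scope.
Local Open Scope ring_scope.

Section Defs.
Variable R : realType.

Definition enorm (k : nat) (x : 'rV[R]_k) : R :=
  Num.sqrt (\sum_(i < k) (x ord0 i) ^+ 2).

(* Integral over R^k w.r.t. k-dimensional Lebesgue measure, realised as the
   iterated one-dimensional Lebesgue integral (Tonelli); used only on
   non-negative integrands. *)
Fixpoint rint (k : nat) : ('rV[R]_k -> \bar R) -> \bar R :=
  match k return ('rV[R]_k -> \bar R) -> \bar R with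
  | 0 => fun f => f 0
  | k'.+1 => fun f =>
      (\int[@lebesgue_measure R]_(t in [set: R])
         rint (fun v : 'rV[R]_k' => f (row_mx (const_mx t : 'rV[R]_1) v)))%E
  end.

Definition borel_measurable_fun (n m : nat)
    (u : 'rV[R]_n * 'rV[R]_m -> R) : Prop :=
  forall B : set R, measurable B ->
    <<s (@open ('rV[R]_n * 'rV[R]_m)%type) >> (u @^-1` B).

Definition bounded_Rnm (n m : nat) (O : set ('rV[R]_n * 'rV[R]_m)) : Prop :=
  exists M : R, forall xy, O xy -> enorm xy.1 ^+ 2 + enorm xy.2 ^+ 2 <= M.

Definition rint2 (n m : nat) (f : 'rV[R]_n * 'rV[R]_m -> \bar R) : \bar R :=
  rint (fun x => rint (fun y => f (x, y))).

Definition Wsp_seminorm_pow (n m : nat) (s p : R)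
    (u : 'rV[R]_n * 'rV[R]_m -> R) : \bar R :=
  (rint2 (fun xy => rint (fun z : 'rV[R]_n =>
       ((`|u xy - u (z, xy.2)| `^ p) / (enorm (xy.1 - z) `^ (n%:R + s * p)))%:E))
   + rint2 (fun xy => rint (fun w : 'rV[R]_m =>
       ((`|u xy - u (xy.1, w)| `^ p) / (enorm (xy.2 - w) `^ (m%:R + s * p)))%:E)))%E.

Definition Wsp_seminorm (n m : nat) (s p : R) (u : 'rV[R]_n * 'rV[R]_m -> R)
  : \bar R := poweR (Wsp_seminorm_pow s p u) p^-1.

Definition Wtilde (n m : nat) (s p : R) (O : set ('rV[R]_n * 'rV[R]_m))
    (u : 'rV[R]_n * 'rV[R]_m -> R) : Prop :=
  [/\ borel_measurable_fun u,
      (rint2 (fun xy => (`|u xy| `^ p)%:E) < +oo)%E,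
      (Wsp_seminorm_pow s p u < +oo)%E &
      forall xy, ~ O xy -> u xy = 0].

Definition Lp_norm_on (n m : nat) (p : R) (O : set ('rV[R]_n * 'rV[R]_m))
    (u : 'rV[R]_n * 'rV[R]_m -> R) : \bar R :=
  poweR (rint2 (fun xy => (\1_O xy * `|u xy| `^ p)%:E)) p^-1.

End Defs.

(* Main.v *)
Require Import Defs.
From HB Require Import structures.
From mathcomp Require Import all_boot all_order all_algebra.
From mathcomp Require Import all_classical all_reals all_analysis.
From mathcomp Require Import ring.
Import Order.TTheory GRing.Theory Num.Theory.
Import numFieldNormedType.Exports.
Local Open Scope classical_set_scope.
Local Open Scope ring_scope.
Lemma int_mono (R : realType) (f g : R -> \bar R) :
  (forall x, (0 <= f x)%E) -> (forall x, (f x <= g x)%E) ->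
  (\int[@lebesgue_measure R]_(t in [set: R]) f t <=
   \int[@lebesgue_measure R]_(t in [set: R]) g t)%E.
Proof.
move=> f0 fg.
have g0 : forall x, (0 <= g x)%E by move=> x; exact: le_trans (f0 x) (fg x).
rewrite !ge0_integralTE//; apply: ereal_sup_le => _ [h hf <-].
by exists h => // x; exact: le_trans (hf x) (fg x).
Qed.

Lemma int_scale (R : realType) (c : R) (f : R -> \bar R) : 0 <= c ->
  (forall x, (0 <= f x)%E) ->
  (c%:E * \int[@lebesgue_measure R]_(t in [set: R]) f t <=
   \int[@lebesgue_measure R]_(t in [set: R]) (c%:E * f t))%E.
Proof.
move=> c0 f0.
have cf0 : forall x, (0 <= c%:E * f x)%E by move=> x; rewrite mule_ge0.
rewrite !ge0_integralTE// -ereal_supZl//; last first.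
  apply/set0P; eexists.
  by exists nnsfun0 => // x /=; rewrite f0.
apply: ge_ereal_sup => _ [_ [h hf <-] <-].
apply: ereal_sup_ubound.
exists (scale_nnsfun h c0).
  by move=> x /=; rewrite EFinM lee_wpmul2l// ?lee_fin ?hf.
exact: sintegralrM.
Qed.

Lemma rint_ge0 (R : realType) (k : nat) (f : 'rV[R]_k -> \bar R) :
  (forall v, (0 <= f v)%E) -> (0 <= rint f)%E.
Proof.
elim: k f => [|k IH] f f0 /=; first exact: f0.
by apply: integral_ge0 => t _; apply: IH.
Qed.

Lemma rint_mono (R : realType) (k : nat) (f g : 'rV[R]_k -> \bar R) :
  (forall v, (0 <= f v)%E) -> (forall v, (f v <= g v)%E) -> (rint f <= rint g)%E.
Proof.
elim: k f g => [|k IH] f g f0 fg /=; first exact: fg.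
apply: int_mono => t; first exact: rint_ge0.
by apply: IH.
Qed.

Lemma rint_scale (R : realType) (k : nat) (c : R) (f : 'rV[R]_k -> \bar R) :
  0 <= c -> (forall v, (0 <= f v)%E) ->
  (c%:E * rint f <= rint (fun v => c%:E * f v))%E.
Proof.
elim: k f => [|k IH] f c0 f0 /=; first by [].
apply: le_trans; first apply: int_scale => // t; first exact: rint_ge0.
apply: int_mono => t; first by rewrite mule_ge0// rint_ge0.
exact: IH.
Qed.

Definition boxind (R : realType) (a : R) (k : nat) (v : 'rV[R]_k) : R :=
  \prod_(i < k) \1_(`[a, a + 1]%classic) (v ord0 i).
Arguments boxind {R} a {k} v.

Lemma boxind_row (R : realType) (a t : R) (k : nat) (v : 'rV[R]_k) :
  boxind a (row_mx (const_mx t : 'rV[R]_1) v) =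
  \1_(`[a, a + 1]%classic) t * boxind a v.
Proof.
rewrite /boxind big_ord_recl; congr (_ * _).
  have -> : (ord0 : 'I_(1 + k)) = lshift k (ord0 : 'I_1) by apply: val_inj.
  by rewrite row_mxEl mxE.
apply: eq_bigr => i _.
have -> : lift ord0 i = rshift 1 i by apply: val_inj.
by rewrite row_mxEr.
Qed.

Lemma rint_box (R : realType) (a : R) (k : nat) (c : R) : 0 <= c ->
  rint (fun v : 'rV[R]_k => (c * boxind a v)%:E) = c%:E.
Proof.
elim: k c => [|k IH] c c0 /=.
  by rewrite /boxind big_ord0 mulr1.
under eq_integral => t _.
  under eq_fun => v do rewrite boxind_row mulrA.
  rewrite IH; last by rewrite mulr_ge0.
  over.
cbv beta.
have H := @integralZl_indic _ _ R (@lebesgue_measure R) setT measurableT (fun _ => `[a, a + 1]%classic) c.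
rewrite /= in H; rewrite H //.
- rewrite integral_indic // setIT.
  have L := @lebesgue_measure_itv R `[a, a + 1].
  rewrite /= lte_fin ltrDl ltr01 -EFinD addrAC subrr add0r in L.
  rewrite -[RHS]mule1; congr (_ * _)%E.
  exact: L.
- by move=> /lt_geF; rewrite c0.
Qed.

Lemma enorm_sq (R : realType) (k : nat) (v : 'rV[R]_k) :
  enorm v ^+ 2 = \sum_(i < k) (v ord0 i) ^+ 2.
Proof. by rewrite /enorm sqr_sqrtr // sumr_ge0 // => i _; rewrite sqr_ge0. Qed.

Lemma boxind_cases (R : realType) (a : R) (k : nat) (v : 'rV[R]_k) :
  boxind a v = 0 \/ (boxind a v = 1 /\ forall i, a <= v ord0 i <= a + 1).
Proof.
case: (pselect (forall i, a <= v ord0 i <= a + 1)) => H.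
  right; split => //; rewrite /boxind big1 // => i _.
  by rewrite indicE mem_set //= in_itv /= H.
left; move/existsNP: H => [i Hi].
rewrite /boxind (bigD1 i) //= indicE memNset ?mul0r //.
Qed.

Lemma pointwise (R : realType) (n m : nat) (Omega : set ('rV[R]_n * 'rV[R]_m))
  (M s p : R) (u : 'rV[R]_n * 'rV[R]_m -> R) (x : 'rV[R]_n) (y : 'rV[R]_m)
  (z : 'rV[R]_n) :
  (0 < n)%N -> 0 < p -> 0 <= s ->
  (forall xy, Omega xy -> enorm xy.1 ^+ 2 + enorm xy.2 ^+ 2 <= M) ->
  (forall xy, ~ Omega xy -> u xy = 0) ->
  forall a E, a = Num.sqrt `|M| + 1 ->
  E = Num.sqrt (2 * `|M| + (2 * (a + 1) ^+ 2) *+ n) `^ (n%:R + s * p) ->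
  `|u (x, y)| `^ p / E * boxind a z <=
  `|u (x, y) - u (z, y)| `^ p / enorm (x - z) `^ (n%:R + s * p).
Proof.
move=> n0 p0 s0 HM van a E Ha HE.
have rhs0 : 0 <= `|u (x, y) - u (z, y)| `^ p / enorm (x - z) `^ (n%:R + s * p).
  by rewrite divr_ge0 // powR_ge0.
have [u0|u0] := eqVneq (u (x, y)) 0.
  by move: rhs0; rewrite u0 normr0 powR0 ?gt_eqF // !mul0r.
have Oxy : Omega (x, y) by apply: contrapT => /van; apply/eqP.
have [b0|[b1 zb]] := boxind_cases _ a _ z; first by rewrite b0 mulr0.
rewrite b1 mulr1.
have a0 : 0 <= a by rewrite Ha addr_ge0 // sqrtr_ge0.
have aM : `|M| < a ^+ 2.
  rewrite Ha sqrrD1 sqr_sqrtr // -addrA ltrDl.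
  by rewrite ltr_wpDl ?ltr01 // mulrn_wge0 // sqrtr_ge0.
have Ozy : ~ Omega (z, y).
  move=> /HM /= H.
  have H1 : a ^+ 2 <= enorm z ^+ 2.
    rewrite enorm_sq (bigD1 (Ordinal n0)) //= -[leLHS]addr0 lerD //.
      have [zl zu] := andP (zb (Ordinal n0)).
      by rewrite ler_sqr ?nnegrE //; apply: le_trans a0 zl.
    by rewrite sumr_ge0 // => i _; rewrite sqr_ge0.
  have : a ^+ 2 <= M.
    apply: le_trans H1 _; apply: le_trans H; rewrite lerDl sqr_ge0 //.
  by move=> aM'; move: (lt_le_trans aM aM'); rewrite ltNge ler_norm.
rewrite (van _ Ozy) subr0.
have xz : x != z.
  by apply/negP => /eqP xz; apply: Ozy; rewrite -xz.
set q := n%:R + s * p.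
have q0 : 0 <= q by rewrite addr_ge0 // mulr_ge0 // ltW.
have sum0 : 0 < \sum_(i < n) ((x - z) ord0 i) ^+ 2.
  rewrite lt_def sumr_ge0 ?andbT; last by move=> i _; rewrite sqr_ge0.
  apply/negP => /eqP /psumr_eq0P H.
  move/negP: xz; apply; apply/eqP/matrixP => i j.
  rewrite (ord1 i).
  have := H (fun k _ => sqr_ge0 _) j isT.
  by rewrite !mxE => /eqP; rewrite sqrf_eq0 subr_eq0 => /eqP.
have e0 : 0 < enorm (x - z) `^ q by rewrite powR_gt0 // sqrtr_gt0.
have eE : enorm (x - z) `^ q <= E.
  rewrite HE -/q; apply: ge0_ler_powR => //; rewrite ?nnegrE ?sqrtr_ge0 //.
  rewrite ler_wsqrtr //.
  apply: le_trans (_ : \sum_(i < n) (2 * (x ord0 i) ^+ 2 + 2 * (a + 1) ^+ 2) <= _).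
    apply: ler_sum => i _; rewrite !mxE.
    have [zl zu] := andP (zb i).
    have z0 : 0 <= z ord0 i by apply: le_trans zl.
    apply: le_trans (_ : 2 * (x ord0 i) ^+ 2 + 2 * (z ord0 i) ^+ 2 <= _).
      by rewrite -subr_ge0 (_ : _ - _ = (x ord0 i + z ord0 i) ^+ 2) ?sqr_ge0 //; ring.
    by rewrite lerD2l ler_pM2l // ler_sqr ?nnegrE // addr_ge0.
  rewrite big_split /= sumr_const card_ord lerD2r -mulr_sumr ler_pM2l //.
  rewrite -enorm_sq; apply: le_trans (ler_norm M).
  by apply: le_trans (HM _ Oxy); rewrite lerDl sqr_ge0.
have E0 : 0 < E by apply: lt_le_trans eE.
rewrite ler_wpM2l ?powR_ge0 //.
by rewrite lef_pV2 // posrE.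
Qed.

Theorem lemma2p6 (R : realType) (n m : nat) (Omega : set ('rV[R]_n * 'rV[R]_m))
  (s p : R) :
  (0 < n)%N -> (0 < m)%N ->
  open Omega -> bounded_Rnm Omega ->
  0 < s < 1 -> 1 < p ->
  exists C : R, 0 < C /\
    forall u : 'rV[R]_n * 'rV[R]_m -> R, Wtilde s p Omega u ->
      (Lp_norm_on p Omega u <= C%:E * Wsp_seminorm s p u)%E.
Proof.
move=> n0 m0 _ [M HM] /andP[s0 s1] p1.
have p0 : 0 < p by apply: lt_trans p1.
set a := Num.sqrt `|M| + 1.
set E := Num.sqrt (2 * `|M| + (2 * (a + 1) ^+ 2) *+ n) `^ (n%:R + s * p).
have E0 : 0 < E.
  rewrite powR_gt0 // sqrtr_gt0 ltr_wpDl ?mulr_ge0 // pmulrn_lgt0 //.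
  rewrite mulr_gt0 // exprn_gt0 // /a ltr_wpDl ?addr_ge0 ?sqrtr_ge0 //.
exists (E `^ p^-1); split; first by rewrite powR_gt0.
move=> u [_ _ Sfin van].
set L := rint2 (fun xy => (\1_Omega xy * `|u xy| `^ p)%:E).
set S := Wsp_seminorm_pow s p u.
have S0 : (0 <= S)%E.
  rewrite /S /Wsp_seminorm_pow adde_ge0 //.
    apply: rint_ge0 => x; apply: rint_ge0 => y; apply: rint_ge0 => z.
    by rewrite lee_fin divr_ge0 ?powR_ge0.
  apply: rint_ge0 => x; apply: rint_ge0 => y; apply: rint_ge0 => z.
  by rewrite lee_fin divr_ge0 ?powR_ge0.
have L0 : (0 <= L)%E.
  apply: rint_ge0 => x; apply: rint_ge0 => y.
  by rewrite lee_fin mulr_ge0 ?powR_ge0 // indicE ler0n.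
set F := fun xy : 'rV[R]_n * 'rV[R]_m => rint (fun z : 'rV[R]_n =>
       ((`|u xy - u (z, xy.2)| `^ p) / (enorm (xy.1 - z) `^ (n%:R + s * p)))%:E).
have stepA : forall xy, (E^-1%:E * (\1_Omega xy * `|u xy| `^ p)%:E <= F xy)%E.
  case=> x y; rewrite -EFinM.
  apply: (@le_trans _ _ ((`|u (x,y)| `^ p / E)%:E)).
    rewrite lee_fin mulrC ler_wpM2r //; first by rewrite invr_ge0 ltW.
    by rewrite ler_piMl ?powR_ge0 // indicE; case: (_ \in _); rewrite ?ler01 ?lexx.
  rewrite -(@rint_box R a n); last by rewrite divr_ge0 ?powR_ge0 // ltW.
  rewrite /F /=; apply: rint_mono => z.
    by rewrite lee_fin mulr_ge0 ?divr_ge0 ?powR_ge0 //; try exact: ltW; case: (boxind_cases _ a _ z) => [->|[-> _]].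
  rewrite lee_fin; apply: (@pointwise R n m Omega M) => //; exact: ltW.
have stepB : (E^-1%:E * L <= rint2 F)%E.
  have Ei0 : 0 <= E^-1 by rewrite invr_ge0 ltW.
  rewrite /L /rint2.
  apply: le_trans; first apply: rint_scale => // x.
    apply: rint_ge0 => y.
    by rewrite lee_fin mulr_ge0 ?powR_ge0 // indicE ler0n.
  apply: rint_mono => x.
    rewrite mule_ge0 ?lee_fin //; apply: rint_ge0 => y.
    by rewrite lee_fin mulr_ge0 ?powR_ge0 // indicE ler0n.
  apply: le_trans; first (apply: rint_scale => // y;
    by rewrite lee_fin mulr_ge0 ?powR_ge0 // indicE ler0n).
  apply: rint_mono => y; last exact: stepA.
  by rewrite mule_ge0 ?lee_fin // mulr_ge0 ?powR_ge0 // indicE ler0n.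
have stepC : (rint2 F <= S)%E.
  rewrite /S /Wsp_seminorm_pow; apply: leeDl.
  apply: rint_ge0 => x; apply: rint_ge0 => y; apply: rint_ge0 => z.
  by rewrite lee_fin divr_ge0 ?powR_ge0.
have LS : (L <= E%:E * S)%E.
  have -> : L = (E%:E * (E^-1%:E * L))%E.
    by rewrite muleA -EFinM mulfV ?gt_eqF // mul1e.
  by rewrite lee_wpmul2l ?lee_fin ?(ltW E0) //; apply: le_trans stepB stepC.
rewrite /Lp_norm_on /Wsp_seminorm -/L -/S -poweR_EFin -poweRM ?lee_fin ?(ltW E0) //.
apply: gt0_ler_poweR => //.
- by rewrite invr_ge0 ltW.
- by rewrite in_itv /= L0 leey.
- by rewrite in_itv /= mule_ge0 ?lee_fin ?(ltW E0) // leey.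
Qed.
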